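(* Let $\mathbb{A}$ be an epistemic Heyting algebra and $a\in\mathbb{A}$. If $b\in\mathsf{Min}_i(\mathbb{A})$ and $b\wedge a\neq\bot$, then $[b]\in\mathsf{Min}_i(\mathbb{A}^a)$.
   Context: Fix a set $\mathsf{Ag}$ of agents. A monadic Heyting algebra is a Heyting algebra $\mathbb{L}$ with, for each $i\in\mathsf{Ag}$, monotone unary operations $\lozenge_i,\Box_i$ such that for all $a,b$: $a\leq\lozenge_i a$; $\Box_i a\leq a$; $\lozenge_i(a\vee b)\leq\lozenge_i a\vee\lozenge_i b$; $\Box_i(a\to b)\leq\Box_i a\to\Box_i b$; $\lozenge_i a\leq\Box_i\lozenge_i a$; $\lozenge_i\Box_i a\leq\Box_i a$; $\Box_i(a\to b)\leq\lozenge_i a\to\lozenge_i b$; $\lozenge_i\bot\leq\bot$; $\top\leq\Box_i\top$. An epistemic Heyting algebra is a finite monadic Heyting algebra with $\lozenge_i a\vee\neg\lozenge_i a=\top$ for all $i,a$. An element $c$ of such an algebra is $i$-minimal if $c\neq\bot$, $\lozenge_i c=c$, and whenever $d<c$ and $\lozenge_i d=d$ then $d=\bot$; $\mathsf{Min}_i(\cdot)$ is the set of $i$-minimal elements. The pseudo-quotient algebra $\mathbb{A}^a$: $b\cong_a c$ iff $b\wedge a=c\wedge a$; its carrier is the quotient Heyting algebra $\mathbb{L}/{\cong_a}$ (classes $[c]$, so $[b]\leq[c]$ iff $b\wedge a\leq c\wedge a$); $\lozenge^a_i[b]=[\lozenge_i(b\wedge a)]$ and $\Box^a_i[b]=[\Box_i(a\to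 b)]$. $i$-minimality in $\mathbb{A}^a$ is w.r.t. $\lozenge^a_i$. *)

(* Defs.v *)
From mathcomp Require Import all_boot all_order.
Set Implicit Arguments. Unset Strict Implicit. Unset Printing Implicit Defensive.
Import Order.TTheory.
Local Open Scope order_scope.

Definition heyting_imp {disp : Order.disp_t} (L : tbDistrLatticeType disp)
  (imp : L -> L -> L) : Prop :=
  forall x y z : L, (x `&` y <= z) = (x <= imp y z).

Definition monadic_heyting {disp : Order.disp_t} (L : tbDistrLatticeType disp)
  (Ag : Type) (imp : L -> L -> L) (dia box : Ag -> L -> L) : Prop :=
  heyting_imp imp /\
  forall i : Ag,
  ((forall a b : L, a <= b -> dia i a <= dia i b) /\
      (forall a b : L, a <= b -> box i a <= box i b) /\
      (forall a : L, a <= dia i a) /\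
      (forall a : L, box i a <= a) /\
      (forall a b : L, dia i (a `|` b) <= dia i a `|` dia i b) /\
      (forall a b : L, box i (imp a b) <= imp (box i a) (box i b)) /\
      (forall a : L, dia i a <= box i (dia i a)) /\
      (forall a : L, dia i (box i a) <= box i a) /\
      (forall a b : L, box i (imp a b) <= imp (dia i a) (dia i b)) /\
      dia i \bot <= \bot /\
      \top <= box i \top).

(* Epistemic Heyting algebra: a finite monadic Heyting algebra (finiteness is
   provided by the carrier being a finTBDistrLatticeType) with
   dia_i a \/ ~ dia_i a = top, where ~x := x -> bot. *)
Definition epistemic_heyting {disp : Order.disp_t} (L : finTBDistrLatticeType disp)
  (Ag : Type) (imp : L -> L -> L) (dia box : Ag -> L -> L) : Prop :=
  monadic_heyting imp dia box /\
  forall (i : Ag) (a : L), dia i a `|` imp (dia i a) \bot = \top.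

Definition is_min {disp : Order.disp_t} (L : tbDistrLatticeType disp)
  (Ag : Type) (dia : Ag -> L -> L) (i : Ag) (c : L) : Prop :=
  [/\ c <> \bot, dia i c = c &
      forall d : L, d < c -> dia i d = d -> d = \bot].

(* The pseudo-quotient algebra A^a, presented on representatives:
   the class [b] of b in L/~=_a, with [b] = [c] iff b /\ a = c /\ a,
   [b] <= [c] iff b /\ a <= c /\ a, bottom [bot], and
   dia^a_i [b] = [dia_i (b /\ a)], box^a_i [b] = [box_i (a -> b)]. *)
Definition qeq {disp : Order.disp_t} (L : tbDistrLatticeType disp) (a b c : L) : Prop :=
  b `&` a = c `&` a.
Definition qle {disp : Order.disp_t} (L : tbDistrLatticeType disp) (a b c : L) : Prop :=
  b `&` a <= c `&` a.
Definition qlt {disp : Order.disp_t} (L : tbDistrLatticeType disp) (a b c : L) : Prop :=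
  qle a b c /\ ~ qeq a b c.
Definition qdia {disp : Order.disp_t} (L : tbDistrLatticeType disp)
  (Ag : Type) (dia : Ag -> L -> L) (a : L) (i : Ag) (b : L) : L :=
  dia i (b `&` a).
Definition qbox {disp : Order.disp_t} (L : tbDistrLatticeType disp)
  (Ag : Type) (imp : L -> L -> L) (box : Ag -> L -> L) (a : L) (i : Ag) (b : L) : L :=
  box i (imp a b).

Definition is_qmin {disp : Order.disp_t} (L : tbDistrLatticeType disp)
  (Ag : Type) (dia : Ag -> L -> L) (a : L) (i : Ag) (c : L) : Prop :=
  [/\ ~ qeq a c \bot, qeq a (qdia dia a i c) c &
      forall d : L, qlt a d c -> qeq a (qdia dia a i d) d -> qeq a d \bot].

(* Main.v *)
Require Import Defs.
From mathcomp Require Import all_boot all_order.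
Import Order.TTheory.
Local Open Scope order_scope.

Theorem lemma4 (disp : Order.disp_t) (L : finTBDistrLatticeType disp) (Ag : Type)
  (imp : L -> L -> L) (dia box : Ag -> L -> L)
  (HA : epistemic_heyting imp dia box) (a : L) (i : Ag) (b : L) :
  is_min dia i b -> b `&` a <> \bot -> is_qmin dia a i b.
Proof.
  case: HA => [[_ Hi] _].
  have [Hmono [_ [Hinc [Hbox [_ [_ [Hdb [Hbd _]]]]]]]] := Hi i.
  have Hidem : forall x, dia i (dia i x) = dia i x.
    move=> x; apply: le_anti; rewrite Hinc andbT.
    have E : box i (dia i x) = dia i x by apply: le_anti; rewrite Hbox Hdb.
    by have := Hbd (dia i x); rewrite E.
  case=> [bne0 Hfix Hmin] Hba.
  rewrite /is_qmin /qeq /qdia /qlt /qle.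
  split.
  - by rewrite meet0x.
  - apply: le_anti; apply/andP; split.
      apply: leI2 => //.
      by apply: le_trans (Hmono _ _ (leIl b a)) _; rewrite Hfix.
    by rewrite lexI leIr andbT Hinc.
  - move=> d [Hle Hne] Hd.
    have Heb : dia i (d `&` a) <= b.
      rewrite -Hfix; apply: Hmono; apply: le_trans Hle _; exact: leIl.
    have [Heq|Hlt] : dia i (d `&` a) = b \/ dia i (d `&` a) < b.
      by rewrite lt_neqAle Heb andbT; case: eqP; [left|right].
    + by exfalso; apply: Hne; rewrite /qeq -Hd Heq.
    + have E := Hmin _ Hlt (Hidem _).
      rewrite meet0x; apply/eqP; rewrite -lex0 -E; exact: Hinc.
Qed.
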